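(* Let $L\subset\mathbb{N}^2$ be a simple planar distributive lattice of rank $d+1$, equipped with the edge-labeling $\lambda$ and the maximal chain $\mathfrak{c}_0$ described in the context. Let $\mathfrak{c}:\min L=y_0<y_1<\dots<y_{d+1}=\max L$ be any maximal chain of $L$ with $\mathfrak{c}\neq\mathfrak{c}_0$. Then (i) $\lambda(\mathfrak{c})>_{\mathrm{lex}}\lambda(\mathfrak{c}_0)$; and (ii) there exists $q$ with $\lambda(y_{q-1}\to y_q)>\lambda(y_q\to y_{q+1})$.
   Context: $\mathbb{N}^2$ is ordered componentwise. A planar distributive lattice is a finite sublattice $L$ of $\mathbb{N}^2$ with $(0,0)\in L$ such that for any $(i,j)\le(k,\ell)$ in $L$ there is a chain in $L$ from $(i,j)$ to $(k,\ell)$ in which the coordinate sum increases by exactly $1$ at each step; thus every covering $x\to y$ in $L$ is a horizontal step $(i,j)\to(i+1,j)$ or a vertical step $(i,j)\to(i,j+1)$. $L$ is simple if it has no cut edge, i.e. no pair $(a,b)$, $\operatorname{rank} b=\operatorname{rank} a+1$, with $a$ the unique element of its rank and $b$ the unique element of its rank. Let $\mathfrak{c}_0: x_0<x_1<\dots<x_{d+1}$, $x_t=(i_t,j_t)$, be the maximal chain with $x_0=(0,0)$, $x_{d+1}=\max L$ such that for every $(k,\ell)\in L$ with $k=i_t$ for some $t$ we have $\ell\le j_t$ (the ''uppermost'' maximal chain). The labeling $\lambda$: the edge $x_t\to x_{t+1}$ of $\mathfrak{c}_0$ gets label $t+1$ ($0\le t\le d$); if $i_{t+1}=i_t+1$,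 every edge of $L$ of the form $(i_t,j)\to(i_{t+1},j)$ gets label $t+1$; if $j_{t+1}=j_t+1$, every edge of $L$ of the form $(i,j_t)\to(i,j_{t+1})$ gets label $t+1$. A chain $z_0\to z_1\to\dots\to z_k$ is labeled by the tuple $(\lambda(z_0\to z_1),\dots,\lambda(z_{k-1}\to z_k))$, and tuples are compared lexicographically ($>_{\mathrm{lex}}$: the leftmost nonzero entry of the difference is positive). *)

(* Defs.v *)
From mathcomp Require Import all_boot.
Set Implicit Arguments. Unset Strict Implicit. Unset Printing Implicit Defensive.

Definition lep (p q : nat * nat) : bool := (p.1 <= q.1) && (p.2 <= q.2).
Definition meetp (p q : nat * nat) : nat * nat := (minn p.1 q.1, minn p.2 q.2).
Definition joinp (p q : nat * nat) : nat * nat := (maxn p.1 q.1, maxn p.2 q.2).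

Definition step (x y : nat * nat) : bool :=
  (y == (x.1.+1, x.2)) || (y == (x.1, x.2.+1)).

(* rank of (i,j) = coordinate sum (distance from (0,0) along unit-step chains) *)
Definition rk (p : nat * nat) : nat := p.1 + p.2.

Definition planar_distr_lattice (L : seq (nat * nat)) : Prop :=
  [/\ (0, 0) \in L,
      (forall p q, p \in L -> q \in L -> meetp p q \in L /\ joinp p q \in L) &
      (forall p q, p \in L -> q \in L -> lep p q ->
         exists s : seq (nat * nat),
           [/\ path step p s, last p s = q & all (fun z => z \in L) s])].

Definition unique_of_rank (L : seq (nat * nat)) (a : nat * nat) : Prop :=
  a \in L /\ forall z, z \in L -> rk z = rk a -> z = a.

(* simple: no cut edge *)
Definition simple_pdl (L : seq (nat * nat)) : Prop :=
  ~ exists a b, [/\ rk b = (rk a).+1, unique_of_rank L a & unique_of_rank L b].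

Definition is_max (L : seq (nat * nat)) (t : nat * nat) : Prop :=
  t \in L /\ forall z, z \in L -> lep z t.

(* A maximal chain of L is represented by c, the chain being (0,0) :: c,
   i.e. y_0 = (0,0), y_1, ..., y_{d+1} = max L, consecutive elements
   covering each other (unit steps). *)
Definition max_chain (L : seq (nat * nat)) (c : seq (nat * nat)) : Prop :=
  [/\ path step (0, 0) c, all (fun z => z \in L) c & is_max L (last (0, 0) c)].

Definition uppermost (L : seq (nat * nat)) (c0 : seq (nat * nat)) : Prop :=
  forall p, p \in L -> exists x, [/\ x \in (0, 0) :: c0, x.1 = p.1 & p.2 <= x.2].

(* The labeling lambda determined by c0: the edges of c0 are
   zip ((0,0)::c0) c0, the t-th (0-based) having label t+1. A horizontal edge
   (i,j)->(i+1,j) gets the label of the horizontal c0-edge from column i to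
   column i+1; a vertical edge (i,j)->(i,j+1) gets the label of the vertical
   c0-edge from row j to row j+1. *)
Definition lam (c0 : seq (nat * nat)) (x y : nat * nat) : nat :=
  let E := zip ((0, 0) :: c0) c0 in
  if y == (x.1.+1, x.2) then
    (find (fun e => (e.1.1 == x.1) && (e.2.1 == x.1.+1)) E).+1
  else
    (find (fun e => (e.1.2 == x.2) && (e.2.2 == x.2.+1)) E).+1.

Definition chain_labels (c0 c : seq (nat * nat)) : seq nat :=
  [seq lam c0 e.1 e.2 | e <- zip ((0, 0) :: c) c].

Definition lexgt (s t : seq nat) : Prop :=
  exists k, take k s = take k t /\ nth 0 t k < nth 0 s k.

(* Main.v *)
Require Import Defs.
From mathcomp Require Import all_boot.
From mathcomp Require Import zify.

Lemma lep_trans : transitive lep.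
Proof.
move=> b a c /andP[h1 h2] /andP[h3 h4]; apply/andP; split;
  [exact: leq_trans h1 h3 | exact: leq_trans h2 h4].
Qed.
Lemma lep_refl : reflexive lep. Proof. by move=> a; rewrite /lep !leqnn. Qed.
Lemma step_lep x y : step x y -> lep x y.
Proof. by case/orP=> /eqP->; rewrite /lep /= ?leqnn ?leqnSn. Qed.

Lemma mono x s i j : path step x s -> i <= j -> j <= size s ->
  lep (nth x (x::s) i) (nth x (x::s) j).
Proof.
move=> p ij js.
have so : sorted lep (x::s) by exact: (sub_path step_lep p).
apply: (sorted_leq_nth lep_trans lep_refl x so) => //; rewrite inE /=; lia.
Qed.

Lemma rk_last x s : path step x s -> rk (last x s) = rk x + size s.
Proof.
elim: s x => [|y s IH] x /=; first by rewrite addn0.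
case/andP=> st p; rewrite IH //; move: st; case/orP=> /eqP->; rewrite /rk /=; lia.
Qed.

Lemma lep_anti p q : lep p q -> lep q p -> p = q.
Proof.
case: p q => [a b] [c e]; rewrite /lep /= => /andP[h1 h2] /andP[h3 h4].
have -> : a = c by apply/eqP; rewrite eqn_leq h1 h3.
by have -> : b = e by apply/eqP; rewrite eqn_leq h2 h4.
Qed.

Lemma nth_zipc (e : (nat*nat)*(nat*nat)) a x s i : i < size s ->
  nth e (zip (x::s) s) i = (nth a (x::s) i, nth a s i).
Proof.
elim: s x i => [|y s IH] x [|i] //= h.
by rewrite IH.
Qed.

Lemma diverge (c c0 : seq (nat*nat)) : size c = size c0 -> c <> c0 ->
  exists k, [/\ k < size c, take k c = take k c0 & nth (0,0) c k <> nth (0,0) c0 k].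
Proof.
elim: c c0 => [|a c IH] [|b c0] //= hs ne.
case: (eqVneq a b) => [eab|nab].
- subst b. have ne' : c <> c0 by move=> E; apply: ne; rewrite E.
  have [k [h1 h2 h3]] := IH c0 (eq_add_S _ _ hs) ne'.
  by exists k.+1; split => //=; rewrite h2.
- by exists 0; split => //; apply/eqP.
Qed.

Lemma cross_row x s r : path step x s -> x.2 <= r -> r < (last x s).2 ->
  exists i, [/\ i < size s, (nth x (x::s) i).2 = r & (nth x s i).2 = r.+1].
Proof.
elim: s x => [|y s IH] x /=; first by move=> _ h1 h2; lia.
case/andP=> st p h1 h2.
have hy : y.2 = x.2 \/ y.2 = x.2.+1 by case/orP: st => /eqP->; [left|right].
have [h|h] : (y.2 = r.+1 /\ x.2 = r) \/ y.2 <= r by lia.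
- by exists 0; case: h => h3 h4; split.
- have [i [i1 i2 i3]] := IH y p h h2.
  exists i.+1; split => //=; rewrite (set_nth_default y) //=; lia.
Qed.

Lemma step_vert a b : step a b -> b.2 = a.2.+1 -> b != (a.1.+1, a.2).
Proof.
case/orP=> /eqP -> /= h; first by lia.
by apply/negP => /eqP [] h'; lia.
Qed.

Lemma has_nth' T (a : pred T) e s k : k < size s -> a (nth e s k) -> has a s.
Proof.
elim: s k => [|x s IH] [|k] //= h1 h2; first by rewrite h2.
by rewrite (IH k) ?orbT.
Qed.

Lemma find_eq T (a : pred T) e s k : k < size s -> a (nth e s k) ->
  (forall i, i < k -> ~~ a (nth e s i)) -> find a s = k.
Proof.
move=> ks ak bef.
have hh : has a s by exact: (has_nth' _ a e s k ks ak).
case: (ltngtP (find a s) k) => // h.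
- by move: (bef _ h); rewrite nth_find.
- by move: (before_find e h); rewrite ak.
Qed.

Lemma find_gt T (a : pred T) e s k : k < size s ->
  (forall i, i <= k -> ~~ a (nth e s i)) -> k < find a s.
Proof.
move=> ks bef; rewrite ltnNge; apply/negP => h.
have hs: has a s by rewrite has_find; exact: leq_ltn_trans h ks.
by move: (bef _ h); rewrite nth_find.
Qed.

Lemma descent (l : seq nat) k i : k < i -> i < size l -> nth 0 l i < nth 0 l k ->
  exists q, q.+1 < size l /\ nth 0 l q.+1 < nth 0 l q.
Proof.
elim: i => [|i IH] // ki isz hlt.
case: (ltnP (nth 0 l i.+1) (nth 0 l i)) => h; first by exists i.
case: (ltngtP k i) => hk.
- apply: IH => //; [exact: ltnW | exact: leq_ltn_trans h hlt].
- lia.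
- subst k; lia.
Qed.

Lemma size_labels c0 c : size (chain_labels c0 c) = size c.
Proof. rewrite /chain_labels size_map size_zip /=; lia. Qed.

Lemma nth_labels c0 c i : i < size c ->
  nth 0 (chain_labels c0 c) i = lam c0 (nth (0,0) ((0,0)::c) i) (nth (0,0) c i).
Proof.
move=> h; rewrite /chain_labels (nth_map ((0,0),(0,0))); last by rewrite size_zip /=; lia.
by rewrite (nth_zipc _ (0,0)).
Qed.

Theorem lemma5 (L : seq (nat * nat)) (d : nat) (c0 c : seq (nat * nat)) :
  planar_distr_lattice L ->
  simple_pdl L ->
  (exists t, is_max L t /\ rk t = d.+1) ->
  max_chain L c0 -> uppermost L c0 ->
  max_chain L c -> c <> c0 ->
  lexgt (chain_labels c0 c) (chain_labels c0 c0) /\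
  (exists q, q.+1 < size (chain_labels c0 c) /\
     nth 0 (chain_labels c0 c) q.+1 < nth 0 (chain_labels c0 c) q).
Proof.
move=> _ _ _ [pc0 allc0 [Mc0 maxc0]] upp [pc allc [Mc maxc]] ne.
have eM : last (0,0) c = last (0,0) c0 by apply: lep_anti; [apply: maxc0 | apply: maxc].
have hsz : size c = size c0.
  by have := rk_last _ _ pc; have := rk_last _ _ pc0; rewrite eM => -> /eqP; rewrite eqn_add2l => /eqP.
have [k [hk htake hne]] := diverge _ _ hsz ne.
have hk0 : k < size c0 by rewrite -hsz.
have hpre : forall i, i <= k -> nth (0,0) ((0,0)::c) i = nth (0,0) ((0,0)::c0) i.
  move=> [|i] //= hi.
  by rewrite -(nth_take _ hi c) htake nth_take.
set x := nth (0,0) ((0,0)::c) k.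
have hx0 : nth (0,0) ((0,0)::c0) k = x by rewrite -hpre.
have sty : step x (nth (0,0) c k) by exact: (pathP (0,0) pc).
have sty0 : step x (nth (0,0) c0 k) by rewrite -hx0; exact: (pathP (0,0) pc0).
have [[ey ey0]|[ey ey0]] :
    (nth (0,0) c k = (x.1.+1, x.2) /\ nth (0,0) c0 k = (x.1, x.2.+1)) \/
    (nth (0,0) c k = (x.1, x.2.+1) /\ nth (0,0) c0 k = (x.1.+1, x.2)).
  move: sty sty0 hne; rewrite /step.
  by case/orP=> /eqP-> ; case/orP=> /eqP-> // _; [left|right].
2:{ exfalso.
  have yL : nth (0,0) c k \in L by apply: (allP allc); exact: mem_nth.
  have [z [zin z1 z2]] := upp _ yL.
  rewrite ey /= in z1 z2.
  have hj : index z ((0,0)::c0) <= size c0 by rewrite -ltnS; rewrite [X in _ < X](_ : _ = size ((0,0)::c0)) // index_mem.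
  have ez := nth_index (0,0) zin.
  case: (leqP (index z ((0,0)::c0)) k) => hjk.
  - have := mono _ _ _ _ pc0 hjk (ltnW hk0); rewrite ez hx0 => /andP[_]; lia.
  - have := mono _ _ _ _ pc0 hjk hj; rewrite ez /= ey0 => /andP[/= h _]; lia. }
set E0 := zip ((0,0)::c0) c0.
have hE0 : k < size E0 by rewrite size_zip /=; lia.
have frow : find (fun e => (e.1.2 == x.2) && (e.2.2 == x.2.+1)) E0 = k.
  apply: (find_eq _ _ ((0,0),(0,0)) _ _ hE0).
  - by rewrite (nth_zipc _ (0,0)) // /= hx0 ey0 /= !eqxx.
  - move=> i hi; rewrite (nth_zipc _ (0,0)); last lia.
    have := mono _ _ i.+1 k pc0 hi (ltnW hk0); rewrite hx0 /= => /andP[_ h].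
    apply/negP => /andP[_ /eqP h']; lia.
have fcol : k < find (fun e => (e.1.1 == x.1) && (e.2.1 == x.1.+1)) E0.
  apply: (find_gt _ _ ((0,0),(0,0)) _ _ hE0).
  move=> i hi; rewrite (nth_zipc _ (0,0)); last lia.
  have := mono _ _ i.+1 k.+1 pc0 hi hk0; rewrite /= ey0 => /andP[h _].
  apply/negP => /andP[_ /eqP h']; move: h h' => /= h h'; lia.
have nv : ((x.1, x.2.+1) == (x.1.+1, x.2)) = false by apply/eqP => -[]; lia.
have labc0 : nth 0 (chain_labels c0 c0) k = k.+1.
  rewrite nth_labels // hx0 ey0 /lam /= nv; congr S; exact: frow.
have labc : k.+1 < nth 0 (chain_labels c0 c) k.
  rewrite nth_labels // ey /lam /= eqxx; exact: fcol.
split.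
- exists k; split; last by rewrite labc0.
  apply: (@eq_from_nth _ 0); first by rewrite !size_takel ?size_labels -?hsz // ltnW.
  move=> i; rewrite size_takel ?size_labels ?(ltnW hk) // => hi.
  rewrite !nth_take // !nth_labels; try lia.
  have := hpre i.+1 hi; rewrite /= => ->.
  by rewrite hpre // ltnW.
- have hMy : x.2 < (last (0,0) c).2.
    have := mono _ _ k.+1 (size c0) pc0 hk0 (leqnn _).
    rewrite -last_nth eM /= ey0 => /andP[_ h]; move: h => /= h; lia.
  have [i [hi hsrc htgt]] := cross_row _ _ x.2 pc (leq0n _) hMy.
  have hki : k < i.
    rewrite ltnNge; apply/negP => hik.
    have := mono _ _ i.+1 k.+1 pc hik hk; rewrite /= ey => /andP[_ h]; move: h => /= h; lia.
  have sti : step (nth (0,0) ((0,0)::c) i) (nth (0,0) c i) by exact: (pathP (0,0) pc).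
  have labi : nth 0 (chain_labels c0 c) i = k.+1.
    rewrite nth_labels // /lam /= (negbTE (step_vert _ _ sti _)); last by rewrite htgt hsrc.
    rewrite hsrc; congr S; exact: frow.
  apply: (descent _ k i) => //; first by rewrite size_labels.
  by rewrite labi.
Qed.
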